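(* Let $n\in\mathbb{N}$ and let $\mathcal{K}^n$ be the $n$-dimensional Khalimsky space. Then $\mathcal{K}^n$ is a connected Alexandroff space whose set of closed points is $\{(2\lambda_1,\ldots,2\lambda_n):\lambda_1,\ldots,\lambda_n\in\mathbb{Z}\}$. Consequently a map $f:\mathcal{K}^n\to\mathcal{K}^n$ has closed graph if and only if $f$ is constant with value $(2\lambda_1,\ldots,2\lambda_n)$ for some integers $\lambda_1,\ldots,\lambda_n$; in particular there are countably infinitely many self-maps of $\mathcal{K}^n$ with closed graph. Moreover, the constant map $g:\mathcal{K}^n\to\mathcal{K}^n$ with value $(1,\ldots,1)$ is continuous but does not have closed graph.
   Context: The Khalimsky line $\mathcal{K}$ is $\mathbb{Z}$ with the topology generated by the base consisting of all sets $\{2m+1\}$ and $\{2m-1,2m,2m+1\}$ for $m\in\mathbb{Z}$; $\mathcal{K}^n$ is the $n$-fold product with the product topology. A map $f:X\to Y$ has closed graph if $G_f=\{(x,f(x)):x\in X\}$ is closed in $X\times Y$. A point $y$ is closed if $\{y\}$ is closed. A topological space is an Alexandroff space if the intersection of every nonempty family of open sets is open. *)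

(* Defs.v *)
From HB Require Import structures.
From mathcomp Require Import all_boot all_order all_algebra.
From mathcomp Require Import all_classical all_reals all_analysis.
Set Implicit Arguments. Unset Strict Implicit. Unset Printing Implicit Defensive.
Import Order.TTheory GRing.Theory Num.Theory.
Local Open Scope classical_set_scope.
Local Open Scope ring_scope.

(** The Khalimsky line: the integers with the topology generated by the
    sets {2m+1} and {2m-1, 2m, 2m+1}, m in Z. *)
Definition khalimsky : Type := int.
HB.instance Definition _ := Choice.on khalimsky.
HB.instance Definition _ := isPointed.Build khalimsky (0 : int).

Definition khalimsky_base (k : khalimsky) : set khalimsky :=
  if (2 %| (k : int))%Z then [set ((k : int) - 1 : khalimsky); k; ((k : int) + 1 : khalimsky)]
  else [set k].

HB.instance Definition _ :=
  isSubBaseTopological.Build khalimsky (@setT khalimsky) khalimsky_base.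

Definition khalimsky_space (n : nat) : topologicalType :=
  prod_topology (fun _ : 'I_n => khalimsky).

Definition alexandroff (T : topologicalType) : Prop :=
  forall F : set (set T), F !=set0 -> F `<=` open -> open (\bigcap_(A in F) A).

Definition closed_graph (X Y : topologicalType) (f : X -> Y) : Prop :=
  closed [set p : X * Y | p.2 = f p.1].

(* Main.v *)
Require Import Defs.
From HB Require Import structures.
From mathcomp Require Import all_boot all_order all_algebra.
From mathcomp Require Import all_classical all_reals all_analysis.
From mathcomp Require Import zify.
Import Order.TTheory GRing.Theory Num.Theory.
Local Open Scope classical_set_scope.
Local Open Scope ring_scope.
Set Implicit Arguments. Unset Strict Implicit.
Lemma base_trans (i k : khalimsky) : khalimsky_base i k ->
  khalimsky_base k `<=` khalimsky_base i.
Proof.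
rewrite /khalimsky_base; case: ifP => Hi /=; last first.
  by move=> H; rewrite H Hi.
move=> H. case: H => [[H|H]|H]; rewrite H; case: ifP => Hk /=.
all: try (exfalso; move: Hi Hk; rewrite ?H; lia).
all: try (by move=> x xk; rewrite xk; left; left).
all: try (by move=> x xk; rewrite xk; right).
all: by move=> ?.
Qed.
Lemma base_self (k : khalimsky) : khalimsky_base k k.
Proof. by rewrite /khalimsky_base; case: ifP => _ /=; [left; right|]. Qed.

Lemma base_open (k : khalimsky) : open (khalimsky_base k).
Proof.
exists [set khalimsky_base k].
  by move=> _ ->; apply: finI_from1.
by rewrite bigcup_set1.
Qed.

Lemma open_base (A : set khalimsky) k : open A -> A k -> khalimsky_base k `<=` A.
Proof.
move=> [D' sD' AE] Ak; rewrite -AE in Ak *.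
case: Ak => B DB Bk x bx; exists B => //.
have [F sF BE] := sD' _ DB.
rewrite -BE in Bk *; move=> i Fi.
have Bki : khalimsky_base i k := Bk i Fi. change (khalimsky_base i x). exact: (@base_trans i k Bki x bx).
Qed.

Definition spec {T : topologicalType} (a b : T) := forall A, open A -> A a -> A b.

Lemma spec_cont {T U : topologicalType} (f : T -> U) a b :
  continuous f -> spec a b -> spec (f a) (f b).
Proof.
move=> cf sab A oA Afa.
have := sab (f @^-1` A); apply => //.
exact: open_comp.
Qed.

Lemma base_spec (a b : khalimsky) : khalimsky_base a b -> spec a b.
Proof. by move=> ab A oA Aa; apply: (open_base oA Aa). Qed.

Lemma K_adj (k : khalimsky) : spec k (k + 1 : khalimsky) \/ spec (k + 1 : khalimsky) k.
Proof.
case E: (2 %| k)%Z.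
  by left; apply: base_spec; rewrite /khalimsky_base E; right.
right; apply: base_spec; rewrite /khalimsky_base.
have -> : (2 %| k + 1)%Z by move: E; lia.
left; left; simpl; by rewrite addrK.
Qed.

Lemma K_triv (B : set khalimsky) :
  (forall a b, spec a b -> (B a <-> B b)) -> forall a c, B a -> B c.
Proof.
move=> HB a c Ba.
have step k : B k <-> B (k + 1 : khalimsky).
  by case: (K_adj k) => /HB // [H1 H2]; split.
have up (m : nat) : B (a + m%:Z : khalimsky).
  elim: m => [|m IH]; first by rewrite addr0.
  by have := (step (a + m%:Z)).1 IH; congr B; lia.
have dn (m : nat) : B (a - m%:Z : khalimsky).
  elim: m => [|m IH]; first by rewrite subr0.
  apply: (step _).2; suff -> : a - m.+1%:Z + 1 = a - m%:Z by [].
  lia.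
have [m [->|->]] : exists m : nat, c = a + m%:Z \/ c = a - m%:Z.
  exists `|c - a|%N; lia.
  exact: up.
exact: dn.
Qed.

Section Prod.
Variable n : nat.
Local Notation KS := (khalimsky_space n).

Lemma dfwithE (z : KS) j (c : khalimsky) i :
  dfwith z j c i = if j == i then c else z i.
Proof. by case: (eqVneq j i) => [<-|ji]; [rewrite dfwithin | rewrite dfwithout]. Qed.

Lemma dfwith_id (z : KS) j : dfwith z j (z j) = z.
Proof.
by apply: functional_extensionality_dep => i; rewrite dfwithE; case: eqP => // ->.
Qed.

Lemma dfw_cont (z : KS) j : continuous (dfwith z j : khalimsky -> KS).
Proof. exact: dfwith_continuous. Qed.

Lemma spec_dfw (z : KS) j a b : spec a b -> spec (dfwith z j a : KS) (dfwith z j b).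
Proof. move=> sab; have := spec_cont (dfw_cont (z:=z) (j:=j)) sab; apply. Qed.

Lemma walk (P : KS -> Prop) (x y : KS) : P x ->
  (forall (z : KS) j, P z -> z j = x j -> P (dfwith z j (y j))) -> P y.
Proof.
move=> Px step.
pose zm (m : nat) : KS := fun i => if (i < m)%N then y i else x i.
have H m : P (zm m).
  elim: m => [|m IH].
    suff -> : zm 0%N = x by [].
    by apply: functional_extensionality_dep => i.
  case: (ltnP m n) => mn.
    have -> : zm m.+1 = dfwith (zm m) (Ordinal mn) (y (Ordinal mn)).
      apply: functional_extensionality_dep => i; rewrite dfwithE /zm.
      case: eqP => [<-|ne]; first by rewrite /= ltnSn.
      have im : (nat_of_ord i == m) = false.
        by apply/negbTE/eqP => im; apply: ne; apply: val_inj.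
      by rewrite ltnS leq_eqVlt im.
    by apply: step => //; rewrite /zm /= ltnn.
  suff -> : zm m.+1 = zm m by [].
  apply: functional_extensionality_dep => i; rewrite /zm.
  have i1 : (i < m)%N by apply: leq_trans (ltn_ord i) mn.
  by rewrite i1 (leq_trans i1 (leqnSn m)).
have -> : y = zm n.
  by apply: functional_extensionality_dep => i; rewrite /zm ltn_ord.
exact: H.
Qed.


Definition U (x : KS) : set KS := [set y | forall i, khalimsky_base (x i) (y i)].

Lemma U_self x : U x x.
Proof. by move=> i; apply: base_self. Qed.

Lemma U_min (A : set KS) x : open A -> A x -> U x `<=` A.
Proof.
move=> oA Ax y Uy; apply: (walk Ax) => z j Az zj.
have oB : open (dfwith z j @^-1` A : set khalimsky).
  apply: (@open_comp khalimsky KS (dfwith z j) A) => // t _; exact: dfw_cont.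
have Bz : (dfwith z j @^-1` A : set khalimsky) (z j) by rewrite /= dfwith_id.
have Hy : khalimsky_base (z j) (y j) by rewrite zj; exact: Uy.
exact: (open_base oB Bz Hy).
Qed.

Lemma U_spec x y : U x y -> spec x y.
Proof. by move=> Uy A oA Ax; apply: (U_min oA Ax). Qed.

Lemma U_open x : open (U x).
Proof.
pose V (m : nat) : set KS := [set y | forall i : 'I_n, (i < m)%N -> khalimsky_base (x i) (y i)].
have H m : open (V m).
  elim: m => [|m IH].
    suff -> : V 0%N = setT by exact: openT.
    by rewrite predeqE => y; split => // _ i.
  case: (ltnP m n) => mn.
    have -> : V m.+1 = V m `&` (proj (Ordinal mn) @^-1` khalimsky_base (x (Ordinal mn))).
      rewrite predeqE => y; split.
        move=> Vy; split; first by move=> i im; apply: Vy; rewrite ltnS ltnW.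
        by apply: Vy => /=.
      move=> [Vy Py] i; rewrite ltnS leq_eqVlt => /orP [/eqP im|im]; last exact: Vy.
      have -> : i = Ordinal mn by apply: val_inj.
      exact: Py.
    apply: openI => //; apply: open_comp => //; last exact: base_open.
    by move=> t _; apply: proj_continuous.
  suff -> : V m.+1 = V m by [].
  rewrite predeqE => y; split => Vy i im; apply: Vy.
    by rewrite ltnS ltnW.
  exact: leq_trans (ltn_ord i) mn.
suff -> : U x = V n by [].
rewrite predeqE => y; split.
  by move=> Uy i _; apply: Uy.
by move=> Vy i; apply: Vy; apply: ltn_ord.
Qed.


Lemma KS_alex : alexandroff KS.
Proof.
move=> F [A0 FA0] Fo.
suff -> : \bigcap_(A in F) A = \bigcup_(x in \bigcap_(A in F) A) U x.
  by apply: bigcup_open => x _; apply: U_open.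
rewrite predeqE => y; split.
  by move=> Fy; exists y => //; apply: U_self.
move=> [x Fx Uy] A FA.
exact: (U_min (Fo _ FA) (Fx _ FA) Uy).
Qed.

Lemma KN_triv (B : set KS) :
  (forall a b, spec a b -> (B a <-> B b)) -> forall a c, B a -> B c.
Proof.
move=> HB a c Ba; apply: (walk Ba) => z j Bz _.
pose B' : set khalimsky := dfwith z j @^-1` B.
have HB' : forall a b, spec a b -> (B' a <-> B' b).
  by move=> a' b' sab; apply: HB; apply: spec_dfw.
have : B' (z j) by rewrite /B' /= dfwith_id.
by move/(K_triv HB' (c j)).
Qed.

Lemma KS_connected : connected [set: KS].
Proof.
move=> B [b Bb] [C oC BC] [D cD BD].
rewrite predeqE => y; split => // _.
apply: (KN_triv _ y Bb) => a b' sab; split.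
  by rewrite BC => -[_ Ca]; split => //; apply: sab.
rewrite BD => -[_ Db]; split => //.
apply: contrapT => Da.
have oD : open (~` D) by apply: closed_openC.
exact: (sab _ oD Da Db).
Qed.


Lemma base_even (a b : khalimsky) : khalimsky_base a b -> (2 %| b)%Z -> a = b.
Proof.
rewrite /khalimsky_base; case: ifP => Ha /=; last by move=> ->.
move=> [[->|->]|->] Hb //; exfalso; move: Ha Hb; lia.
Qed.

Lemma odd_spec (c : KS) i : ~~ (2 %| c i)%Z ->
  spec (dfwith c i (c i - 1) : KS) c /\ (dfwith c i (c i - 1) : KS) <> c.
Proof.
move=> ci; split.
  have H : spec (c i - 1 : khalimsky) (c i).
    apply: base_spec; rewrite /khalimsky_base.
    have -> : (2 %| c i - 1)%Z by move: ci; lia.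
    by right; rewrite /=; lia.
  by have := spec_dfw (z:=c) (j:=i) H; rewrite dfwith_id.
move=> /(congr1 (fun f : KS => f i)); rewrite /= dfwithin; lia.
Qed.

Lemma closed_pt (x : KS) : closed [set x] <-> forall i, (2 %| x i)%Z.
Proof.
split.
  move=> cx i; apply: contrapT => /negP xi.
  have [sp ne] := odd_spec xi.
  have oC : open (~` [set x]) by apply: closed_openC.
  exact: (sp _ oC ne erefl).
move=> ev; rewrite -openC.
suff -> : ~` [set x] = \bigcup_(y in ~` [set x]) U y.
  by apply: bigcup_open => y _; apply: U_open.
rewrite predeqE => z; split.
  by move=> nz; exists z => //; apply: U_self.
move=> [y ny Uz] zx; apply: ny; rewrite zx in Uz.
apply: functional_extensionality_dep => i.
exact: (base_even (Uz i) (ev i)).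
Qed.

End Prod.

Lemma graph_spec {X Y : topologicalType} (G : set (X * Y)) a b u v :
  closed G -> spec a b -> spec u v -> G (b, v) -> G (a, u).
Proof.
move=> cG sab suv Gbv; apply: cG => B [[P Q] [/= Pa Qu] PQB].
move: Pa Qu; rewrite !nbhsE => -[P' [oP P'a] sP] [Q' [oQ Q'u] sQ].
exists (b, v); split => //; apply: PQB; split => /=.
  by apply: sP; apply: sab.
by apply: sQ; apply: suv.
Qed.

Lemma spec_refl {T : topologicalType} (a : T) : spec a a.
Proof. by []. Qed.

Lemma graph_char (n : nat) (f : khalimsky_space n -> khalimsky_space n) :
  closed_graph f <->
  exists l : 'I_n -> int,
    f = (fun _ => (fun i : 'I_n => (2 * l i : khalimsky)) : khalimsky_space n).
Proof.
split.
  move=> cG.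
  pose pt : khalimsky_space n := fun _ => (0 : khalimsky).
  pose c := f pt.
  have fab a b : spec a b -> f a = f b.
    move=> sab.
    have Gb : [set p : khalimsky_space n * khalimsky_space n | p.2 = f p.1] (b, f b) by [].
    have := graph_spec cG sab (@spec_refl _ (f b)) Gb.
    by move=> /= ->.
  have fconst x : f x = c.
    apply: (@KN_triv n [set x | f x = c] _ pt x erefl) => a b sab /=.
    by rewrite (fab _ _ sab).
  have ev i : (2 %| c i)%Z.
    apply: contrapT => /negP ci.
    have [sp ne] := odd_spec ci.
    have Gp : [set p : khalimsky_space n * khalimsky_space n | p.2 = f p.1] (pt, c) by [].
    have := graph_spec cG (@spec_refl _ pt) sp Gp.
    by move=> /= E; apply: ne; rewrite E.
  exists (fun i => (c i %/ 2)%Z).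
  apply: functional_extensionality_dep => x.
  apply: functional_extensionality_dep => i.
  rewrite fconst /=; move: (ev i); lia.
move=> [l ->].
pose c : khalimsky_space n := fun i => (2 * l i : khalimsky).
have cc : closed [set c] by apply/closed_pt => i; rewrite /c; lia.
move=> p Cp; apply: contrapT => ne.
have oC : open (~` [set c]) by apply: closed_openC.
have Hn : nbhs p [set q : khalimsky_space n * khalimsky_space n | q.2 <> c].
  exists (setT, ~` [set c]) => /=.
    by split; [exact: filterT | apply: open_nbhs_nbhs; split].
  by move=> [q1 q2] [_ ?].
have [q [Gq Nq]] := Cp _ Hn.
exact: Nq Gq.
Qed.

Theorem mainTheorem9 (n : nat) (n_gt0 : (0 < n)%N) :
  connected [set: khalimsky_space n] /\
      alexandroff (khalimsky_space n) /\
      [set x : khalimsky_space n | closed [set x]] =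
        [set x : khalimsky_space n | forall i : 'I_n, exists l : int, x i = 2 * l] /\
      (forall f : khalimsky_space n -> khalimsky_space n,
          closed_graph f <->
          exists l : 'I_n -> int,
            f = (fun _ => (fun i : 'I_n => (2 * l i : khalimsky)) : khalimsky_space n)) /\
      ([set f : khalimsky_space n -> khalimsky_space n | closed_graph f]
         #= [set: nat])%card /\
      continuous (fun _ : khalimsky_space n =>
                    (fun _ : 'I_n => (1 : khalimsky)) : khalimsky_space n) /\
      ~ closed_graph (fun _ : khalimsky_space n =>
                    (fun _ : 'I_n => (1 : khalimsky)) : khalimsky_space n).
Proof.
pose pt : khalimsky_space n := fun _ => (0 : khalimsky).
pose i0 : 'I_n := Ordinal n_gt0.
split; first exact: KS_connected.
split; first exact: KS_alex.
split.
  rewrite predeqE => x; split.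
    move=> /closed_pt ev i; exists ((x i) %/ 2)%Z; move: (ev i); lia.
  move=> ev; apply/closed_pt => i; have [l ->] := ev i; lia.
split; first exact: graph_char.
split.
  apply/card_eqPle; split.
    apply/countable_injP.
    exists (fun f : khalimsky_space n -> khalimsky_space n =>
      pickle ([ffun i => (f pt i : int)] : {ffun 'I_n -> int})).
    move=> f g; rewrite !inE => /graph_char [lf ->] /graph_char [lg ->].
    move=> /(pcan_inj pickleK) /ffunP H.
    apply: functional_extensionality_dep => x.
    apply: functional_extensionality_dep => i.
    by have := H i; rewrite !ffunE.
  pose h (k : nat) : khalimsky_space n -> khalimsky_space n :=
    fun _ => fun _ => (2 * k%:Z : khalimsky).
  have hinj : {in [set: nat] &, injective h}.
    move=> k1 k2 _ _ E.
    have := congr1 (fun f => f pt i0) E; rewrite /h /=; lia.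
  apply: (@card_le_trans _ _ _ (h @` [set: nat])).
    by have /card_eqPle [] := inj_card_eq hinj.
  apply: subset_card_le => _ [k _ <-].
  apply/graph_char; exists (fun _ => k%:Z); by [].
split; first exact: cst_continuous.
move=> /graph_char [l E].
have := congr1 (fun f => f pt i0) E; rewrite /=; lia.
Qed.
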